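(* Let $ABCD$ be a convex quadrilateral in which no two opposite sides are parallel, and let $\omega_1$ be the circle with center $I_1$ and radius $r_1$ (so $\omega_1$ is tangent to the lines $AB$ and $CD$). If $\omega_1$ is also tangent to line $BC$ or to line $DA$, then $\omega_1$ is tangent to all four lines $AB,BC,CD,DA$ (so that $ABCD$ is tangential to $\omega_1$). Analogously, if the circle $\omega_2$ with center $I_2$ and radius $r_2$ is tangent to line $AB$ or line $CD$ in addition to lines $BC$ and $DA$, then $\omega_2$ is tangent to all four side lines.
   Context: Let $E$ be the intersection point of lines $AB$ and $DC$, and $F$ the intersection point of lines $AD$ and $BC$. Let $M,N$ be the midpoints of the diagonals $AC$ and $BD$; the line $MN$ is the Newton line. $I_1$ is the intersection point of the bisector line of the angle $\angle AED$ (the angle at $E$ between rays $EA$ and $ED$) with the line $MN$, and $r_1$ is the common distance from $I_1$ to the lines $AB$ and $CD$. $I_2$ is the intersection point of the bisector line of the angle $\angle AFB$ (the angle at $F$ between rays $FA$ and $FB$) with the line $MN$, and $r_2$ is the common distance from $I_2$ to the lines $BC$ and $DA$. It is assumed these intersections are single points. *)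

(* Defs.v *)
From Stdlib Require Import Reals.
Open Scope R_scope.

Definition point := (R * R)%type.

Definition vsub (P Q : point) : point := (fst P - fst Q, snd P - snd Q).
Definition vadd (P Q : point) : point := (fst P + fst Q, snd P + snd Q).
Definition vscale (k : R) (P : point) : point := (k * fst P, k * snd P).
Definition cross (u v : point) : R := fst u * snd v - snd u * fst v.
Definition vnorm (u : point) : R := sqrt (fst u * fst u + snd u * snd u).
Definition midpoint (P Q : point) : point := vscale (1/2) (vadd P Q).

Definition orient (P Q S : point) : R := cross (vsub Q P) (vsub S P).

(* P lies on the line through X and Y (X <> Y assumed where used) *)
Definition on_line (P X Y : point) : Prop := orient X Y P = 0.

Definition on_line_dir (P O w : point) : Prop := cross w (vsub P O) = 0.

Definition dist_line (P X Y : point) : R :=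
  Rabs (cross (vsub Y X) (vsub P X)) / vnorm (vsub Y X).

Definition bisector_dir (X O Y : point) : point :=
  vadd (vscale (/ vnorm (vsub X O)) (vsub X O))
       (vscale (/ vnorm (vsub Y O)) (vsub Y O)).

Definition on_bisector (P X O Y : point) : Prop :=
  on_line_dir P O (bisector_dir X O Y).

Definition convex_quad (A B C D : point) : Prop :=
  (0 < orient A B C /\ 0 < orient B C D /\ 0 < orient C D A /\ 0 < orient D A B) \/
  (orient A B C < 0 /\ orient B C D < 0 /\ orient C D A < 0 /\ orient D A B < 0).

Definition parallel (X Y Z W : point) : Prop := cross (vsub Y X) (vsub W Z) = 0.

Definition tangent_line (O : point) (r : R) (X Y : point) : Prop :=
  dist_line O X Y = r.

(* Main.v *)
Require Import Defs.
From Stdlib Require Import Reals Lra Psatz.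
Open Scope R_scope.

Definition nsq (u : point) : R := fst u * fst u + snd u * snd u.

Lemma abs_sqrt_form x y : 0 < y -> Rabs x / sqrt y = sqrt (x * x / y).
Proof.
  intro Hy. rewrite sqrt_div_alt by exact Hy.
  rewrite <- sqrt_Rsqr_abs. reflexivity.
Qed.

Lemma abs_div_sqrt_eq x1 y1 x2 y2 : 0 < y1 -> 0 < y2 ->
  (Rabs x1 / sqrt y1 = Rabs x2 / sqrt y2 <-> (x1*x1)*y2 = (x2*x2)*y1).
Proof.
  intros H1 H2. rewrite !abs_sqrt_form by assumption.
  split.
  - intro H. apply sqrt_inj in H.
    + field_simplify in H; try lra.
      apply (Rmult_eq_compat_r (y1*y2)) in H. field_simplify in H; lra.
    + apply Rmult_le_pos; [nra | left; apply Rinv_0_lt_compat; lra].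
    + apply Rmult_le_pos; [nra | left; apply Rinv_0_lt_compat; lra].
  - intro H. f_equal. field_simplify_eq; lra.
Qed.

Lemma dist_eq_iff P X Y Z W : 0 < nsq (vsub Y X) -> 0 < nsq (vsub W Z) ->
  (dist_line P X Y = dist_line P Z W <->
   (cross (vsub Y X) (vsub P X) * cross (vsub Y X) (vsub P X)) * nsq (vsub W Z) =
   (cross (vsub W Z) (vsub P Z) * cross (vsub W Z) (vsub P Z)) * nsq (vsub Y X)).
Proof.
  intros H1 H2. unfold dist_line, vnorm. apply abs_div_sqrt_eq; assumption.
Qed.

Lemma dist_sym P X Y : dist_line P X Y = dist_line P Y X.
Proof.
  destruct P as [p1 p2], X as [x1 x2], Y as [y1 y2].
  unfold dist_line, vnorm, cross, vsub; simpl.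
  f_equal.
  - replace ((x1 - y1) * (p2 - y2) - (x2 - y2) * (p1 - y1)) with
      (- ((y1 - x1) * (p2 - x2) - (y2 - x2) * (p1 - x1))) by ring.
    symmetry; apply Rabs_Ropp.
  - f_equal. ring.
Qed.

Lemma col_param u1 u2 v1 v2 : 0 < u1*u1+u2*u2 -> u1*v2 - u2*v1 = 0 ->
  exists t, v1 = t*u1 /\ v2 = t*u2.
Proof.
  intros H H0. exists ((u1*v1+u2*v2)/(u1*u1+u2*u2)). split.
  - assert (u2*(u1*v2-u2*v1)=0) by (rewrite H0; ring).
    field_simplify_eq; [| lra]. lra.
  - assert (u1*(u1*v2-u2*v1)=0) by (rewrite H0; ring).
    field_simplify_eq; [| lra]. lra.
Qed.

Lemma sumsq0 x y : x*x + y*y <= 0 -> x = 0 /\ y = 0.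
Proof.
  intro h. pose proof (Rle_0_sqr x); pose proof (Rle_0_sqr y); unfold Rsqr in *.
  assert (x*x = 0) by lra. assert (y*y = 0) by lra.
  apply Rmult_integral in H1; apply Rmult_integral in H2. split; tauto.
Qed.

Lemma core (e1 e2 a1 a2 d1 d2 al be ga de la : R) (A B C D J : point) :
  a1*a1+a2*a2 = 1 -> d1*d1+d2*d2 = 1 -> a1*d2-a2*d1 <> 0 ->
  al <> 0 -> be <> 0 -> ga <> 0 -> de <> 0 -> al <> be -> ga <> de ->
  A = (e1+al*a1, e2+al*a2) -> B = (e1+be*a1, e2+be*a2) ->
  C = (e1+ga*d1, e2+ga*d2) -> D = (e1+de*d1, e2+de*d2) ->
  J = (e1+la*(a1+d1), e2+la*(a2+d2)) ->
  on_line J (midpoint A C) (midpoint B D) ->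
  dist_line J C D = dist_line J A B /\
  ((dist_line J B C = dist_line J A B \/ dist_line J D A = dist_line J A B) ->
   dist_line J B C = dist_line J A B /\ dist_line J D A = dist_line J A B).
Proof.
  intros Ha Hd Hc Hal Hbe Hga Hde Hab Hgd -> -> -> -> -> HN.
  set (c := a1*d2-a2*d1). set (k := a1*d1+a2*d2).
  unfold on_line, orient, midpoint, cross, vsub, vadd, vscale in HN; simpl in HN.
  assert (HG : (be-al)*(2*la-ga) - (de-ga)*(2*la-al) = 0).
  { assert (E: c * ((be-al)*(2*la-ga) - (de-ga)*(2*la-al)) = 0).
    { match type of HN with ?L = 0 => transitivity (4*L); [unfold c; field | rewrite HN; ring] end. }
    apply Rmult_integral in E. destruct E; [contradiction | assumption]. }
  assert (nAB : nsq (vsub (e1+be*a1, e2+be*a2) (e1+al*a1, e2+al*a2)) = (be-al)*(be-al)).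
  { unfold nsq, vsub; simpl. transitivity ((be-al)*(be-al)*(a1*a1+a2*a2)); [ring|rewrite Ha; ring]. }
  assert (nCD : nsq (vsub (e1+de*d1, e2+de*d2) (e1+ga*d1, e2+ga*d2)) = (de-ga)*(de-ga)).
  { unfold nsq, vsub; simpl. transitivity ((de-ga)*(de-ga)*(d1*d1+d2*d2)); [ring|rewrite Hd; ring]. }
  assert (nBC : nsq (vsub (e1+ga*d1, e2+ga*d2) (e1+be*a1, e2+be*a2)) = be*be+ga*ga-2*be*ga*k).
  { unfold nsq, vsub, k; simpl.
    transitivity (be*be*(a1*a1+a2*a2)+ga*ga*(d1*d1+d2*d2)-2*be*ga*(a1*d1+a2*d2)); [ring|rewrite Ha, Hd; ring]. }
  assert (nDA : nsq (vsub (e1+al*a1, e2+al*a2) (e1+de*d1, e2+de*d2)) = al*al+de*de-2*al*de*k).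
  { unfold nsq, vsub, k; simpl.
    transitivity (al*al*(a1*a1+a2*a2)+de*de*(d1*d1+d2*d2)-2*al*de*(a1*d1+a2*d2)); [ring|rewrite Ha, Hd; ring]. }
  set (J := (e1+la*(a1+d1), e2+la*(a2+d2))).
  assert (xAB : cross (vsub (e1+be*a1, e2+be*a2) (e1+al*a1, e2+al*a2)) (vsub J (e1+al*a1, e2+al*a2)) = (be-al)*la*c).
  { unfold cross, vsub, J, c; simpl; ring. }
  assert (xCD : cross (vsub (e1+de*d1, e2+de*d2) (e1+ga*d1, e2+ga*d2)) (vsub J (e1+ga*d1, e2+ga*d2)) = -((de-ga)*la*c)).
  { unfold cross, vsub, J, c; simpl; ring. }
  assert (xBC : cross (vsub (e1+ga*d1, e2+ga*d2) (e1+be*a1, e2+be*a2)) (vsub J (e1+be*a1, e2+be*a2)) = c*(ga*be - la*(be+ga))).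
  { unfold cross, vsub, J, c; simpl; ring. }
  assert (xDA : cross (vsub (e1+al*a1, e2+al*a2) (e1+de*d1, e2+de*d2)) (vsub J (e1+de*d1, e2+de*d2)) = -(c*(al*de - la*(al+de)))).
  { unfold cross, vsub, J, c; simpl; ring. }
  assert (Hk : k*k <= 1).
  { assert (k*k + c*c = (a1*a1+a2*a2)*(d1*d1+d2*d2)) by (unfold k, c; ring).
    rewrite Ha, Hd in H. nra. }
  assert (Hc2 : 0 < c*c) by (destruct (Rtotal_order c 0) as [h|[h|h]]; [nra|contradiction|nra]).
  assert (pAB : 0 < nsq (vsub (e1+be*a1, e2+be*a2) (e1+al*a1, e2+al*a2))).
  { rewrite nAB. assert (be - al <> 0) by (intro; apply Hab; lra).
    destruct (Rtotal_order (be-al) 0) as [h|[h|h]]; [nra|contradiction|nra]. }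
  assert (pCD : 0 < nsq (vsub (e1+de*d1, e2+de*d2) (e1+ga*d1, e2+ga*d2))).
  { rewrite nCD. assert (de - ga <> 0) by (intro; apply Hgd; lra).
    destruct (Rtotal_order (de-ga) 0) as [h|[h|h]]; [nra|contradiction|nra]. }
  assert (pBC : 0 < nsq (vsub (e1+ga*d1, e2+ga*d2) (e1+be*a1, e2+be*a2))).
  { rewrite nBC.
    assert (E: (be*be+ga*ga-2*be*ga*k)*1 = (be - ga*k)*(be-ga*k) + ga*ga*c*c).
    { assert (k*k + c*c = (a1*a1+a2*a2)*(d1*d1+d2*d2)) by (unfold k, c; ring).
      rewrite Ha, Hd in H. nra. }
    assert (0 < ga*ga*(c*c)) by (apply Rmult_lt_0_compat; [|exact Hc2];
       destruct (Rtotal_order ga 0) as [h|[h|h]]; [nra|contradiction|nra]).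
    pose proof (Rle_0_sqr (be-ga*k)); unfold Rsqr in *. lra. }
  assert (pDA : 0 < nsq (vsub (e1+al*a1, e2+al*a2) (e1+de*d1, e2+de*d2))).
  { rewrite nDA.
    assert (E: (al*al+de*de-2*al*de*k)*1 = (de - al*k)*(de-al*k) + al*al*c*c).
    { assert (k*k + c*c = (a1*a1+a2*a2)*(d1*d1+d2*d2)) by (unfold k, c; ring).
      rewrite Ha, Hd in H. nra. }
    assert (0 < al*al*(c*c)) by (apply Rmult_lt_0_compat; [|exact Hc2];
       destruct (Rtotal_order al 0) as [h|[h|h]]; [nra|contradiction|nra]).
    pose proof (Rle_0_sqr (de-al*k)); unfold Rsqr in *. lra. }
  set (Qbg := be*ga - 2*la*(be+ga) + 2*la*la*(1+k)).
  set (Qad := al*de - 2*la*(al+de) + 2*la*la*(1+k)).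
  assert (HQ : Qad = Qbg + ((be-al)*(2*la-ga) - (de-ga)*(2*la-al))) by (unfold Qad, Qbg; ring).
  rewrite HG, Rplus_0_r in HQ.
  assert (K : c*c*((be-al)*(be-al)) <> 0).
  { apply Rmult_integral_contrapositive; split; [lra|].
    assert (be - al <> 0) by (intro; apply Hab; lra). apply Rmult_integral_contrapositive; tauto. }
  assert (EBC : dist_line J (e1+be*a1, e2+be*a2) (e1+ga*d1, e2+ga*d2) =
                dist_line J (e1+al*a1, e2+al*a2) (e1+be*a1, e2+be*a2) <-> Qbg = 0).
  { rewrite dist_eq_iff by assumption. rewrite nAB, nBC, xAB, xBC.
    assert (I : c*(ga*be - la*(be+ga)) * (c*(ga*be - la*(be+ga))) * ((be-al)*(be-al)) -
       (be-al)*la*c*((be-al)*la*c)*(be*be+ga*ga-2*be*ga*k) = c*c*((be-al)*(be-al))*(be*ga)*Qbg)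
      by (unfold Qbg; ring).
    split; intro H.
    - assert (c*c*((be-al)*(be-al))*(be*ga)*Qbg = 0) by lra.
      apply Rmult_integral in H0; destruct H0 as [H0|H0]; [|exact H0].
      apply Rmult_integral in H0; destruct H0 as [H0|H0]; [contradiction|].
      apply Rmult_integral in H0; destruct H0; contradiction.
    - rewrite H, Rmult_0_r in I. lra. }
  assert (EDA : dist_line J (e1+de*d1, e2+de*d2) (e1+al*a1, e2+al*a2) =
                dist_line J (e1+al*a1, e2+al*a2) (e1+be*a1, e2+be*a2) <-> Qad = 0).
  { rewrite dist_eq_iff by assumption. rewrite nAB, nDA, xAB, xDA.
    assert (I : -(c*(al*de - la*(al+de))) * -(c*(al*de - la*(al+de))) * ((be-al)*(be-al)) -
       (be-al)*la*c*((be-al)*la*c)*(al*al+de*de-2*al*de*k) = c*c*((be-al)*(be-al))*(al*de)*Qad)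
      by (unfold Qad; ring).
    split; intro H.
    - assert (c*c*((be-al)*(be-al))*(al*de)*Qad = 0) by lra.
      apply Rmult_integral in H0; destruct H0 as [H0|H0]; [|exact H0].
      apply Rmult_integral in H0; destruct H0 as [H0|H0]; [contradiction|].
      apply Rmult_integral in H0; destruct H0; contradiction.
    - rewrite H, Rmult_0_r in I. lra. }
  split.
  - rewrite dist_eq_iff by assumption. rewrite nAB, nCD, xAB, xCD. ring.
  - rewrite EBC, EDA. lra.
Qed.

Lemma part (A B C D E J : point) :
  orient A B C <> 0 -> orient B C D <> 0 -> orient C D A <> 0 -> orient D A B <> 0 ->
  ~ parallel A B D C -> on_line E A B -> on_line E D C -> on_bisector J A E D ->
  on_line J (midpoint A C) (midpoint B D) ->
  dist_line J C D = dist_line J A B /\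
  ((dist_line J B C = dist_line J A B \/ dist_line J D A = dist_line J A B) ->
   dist_line J B C = dist_line J A B /\ dist_line J D A = dist_line J A B).
Proof.
  intros oABC oBCD oCDA oDAB Hnp HEAB HEDC Hbis HN.
  destruct A as [xa ya], B as [xb yb], C as [xc yc], D as [xd yd], E as [xe ye], J as [xj yj].
  unfold orient, cross, vsub in oABC, oBCD, oCDA, oDAB; simpl in oABC, oBCD, oCDA, oDAB.
  unfold on_line, orient, cross, vsub in HEAB, HEDC; simpl in HEAB, HEDC.
  assert (Hu : 0 < (xa-xe)*(xa-xe)+(ya-ye)*(ya-ye)).
  { destruct (Rle_lt_dec ((xa-xe)*(xa-xe)+(ya-ye)*(ya-ye)) 0) as [h|h]; [|exact h].
    exfalso. apply sumsq0 in h. assert (xa = xe) by lra. assert (ya = ye) by lra. subst. apply oCDA. lra. }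
  assert (Hw : 0 < (xd-xe)*(xd-xe)+(yd-ye)*(yd-ye)).
  { destruct (Rle_lt_dec ((xd-xe)*(xd-xe)+(yd-ye)*(yd-ye)) 0) as [h|h]; [|exact h].
    exfalso. apply sumsq0 in h. assert (xd = xe) by lra. assert (yd = ye) by lra. subst. apply oDAB. lra. }
  destruct (col_param (xa-xe) (ya-ye) (xb-xe) (yb-ye) Hu) as [b' [Hb1 Hb2]]; [lra|].
  destruct (col_param (xd-xe) (yd-ye) (xc-xe) (yc-ye) Hw) as [g' [Hg1 Hg2]]; [lra|].
  assert (Hb0 : b' <> 0).
  { intro h; subst b'. assert (xb = xe) by lra. assert (yb = ye) by lra. subst. apply oBCD. lra. }
  assert (Hg0 : g' <> 0).
  { intro h; subst g'. assert (xc = xe) by lra. assert (yc = ye) by lra. subst. apply oABC. lra. }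
  assert (Hb1' : b' <> 1).
  { intro h; subst b'. assert (xb = xa) by lra. assert (yb = ya) by lra. subst. apply oABC. lra. }
  assert (Hg1' : g' <> 1).
  { intro h; subst g'. assert (xc = xd) by lra. assert (yc = yd) by lra. subst. apply oBCD. lra. }
  assert (Hcr : (xa-xe)*(yd-ye) - (ya-ye)*(xd-xe) <> 0).
  { intro h. apply Hnp. unfold parallel, cross, vsub; simpl.
    replace (xb - xa) with ((b'-1)*(xa-xe)) by lra.
    replace (yb - ya) with ((b'-1)*(ya-ye)) by lra.
    replace (xc - xd) with ((g'-1)*(xd-xe)) by lra.
    replace (yc - yd) with ((g'-1)*(yd-ye)) by lra.
    transitivity ((b'-1)*(g'-1)*((xa-xe)*(yd-ye) - (ya-ye)*(xd-xe))); [ring|rewrite h; ring]. }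
  set (p := sqrt ((xa-xe)*(xa-xe)+(ya-ye)*(ya-ye))).
  set (q := sqrt ((xd-xe)*(xd-xe)+(yd-ye)*(yd-ye))).
  assert (Hp : 0 < p) by (apply sqrt_lt_R0; exact Hu).
  assert (Hq : 0 < q) by (apply sqrt_lt_R0; exact Hw).
  assert (Hp2 : p*p = (xa-xe)*(xa-xe)+(ya-ye)*(ya-ye)) by (apply sqrt_sqrt; lra).
  assert (Hq2 : q*q = (xd-xe)*(xd-xe)+(yd-ye)*(yd-ye)) by (apply sqrt_sqrt; lra).
  unfold on_bisector, on_line_dir, bisector_dir, vnorm, cross, vsub, vadd, vscale in Hbis;
    simpl in Hbis. fold p q in Hbis.
  set (a1 := / p * (xa - xe)). set (a2 := / p * (ya - ye)).
  set (d1 := / q * (xd - xe)). set (d2 := / q * (yd - ye)).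
  fold a1 a2 d1 d2 in Hbis.
  assert (Hc : a1*d2 - a2*d1 <> 0).
  { unfold a1, a2, d1, d2. intro h. apply Hcr.
    apply (Rmult_eq_reg_l (/p * /q)); [|apply Rmult_integral_contrapositive; split; apply Rinv_neq_0_compat; lra].
    rewrite Rmult_0_r. rewrite <- h. ring. }
  assert (Hbd : 0 < (a1+d1)*(a1+d1)+(a2+d2)*(a2+d2)).
  { destruct (Rle_lt_dec ((a1+d1)*(a1+d1)+(a2+d2)*(a2+d2)) 0) as [h|h]; [|exact h].
    exfalso. apply sumsq0 in h. assert (d1 = -a1) by lra. assert (d2 = -a2) by lra. apply Hc.
    rewrite H, H0. ring. }
  destruct (col_param (a1+d1) (a2+d2) (xj-xe) (yj-ye) Hbd) as [la [Hj1 Hj2]]; [lra|].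
  apply (core xe ye a1 a2 d1 d2 p (b'*p) (g'*q) q la).
  - unfold a1, a2. field_simplify_eq; lra.
  - unfold d1, d2. field_simplify_eq; lra.
  - exact Hc.
  - lra.
  - apply Rmult_integral_contrapositive; split; lra.
  - apply Rmult_integral_contrapositive; split; lra.
  - lra.
  - intro h. apply Hb1'. apply (Rmult_eq_reg_r p); lra.
  - intro h. apply Hg1'. apply (Rmult_eq_reg_r q); lra.
  - unfold a1, a2. f_equal; field; lra.
  - unfold a1, a2. f_equal; [transitivity (xe + b'*(xa-xe)) | transitivity (ye + b'*(ya-ye))];
      try lra; field; lra.
  - unfold d1, d2. f_equal; [transitivity (xe + g'*(xd-xe)) | transitivity (ye + g'*(yd-ye))];
      try lra; field; lra.
  - unfold d1, d2. f_equal; field; lra.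
  - f_equal; lra.
  - exact HN.
Qed.

Lemma orient_rev X Y Z : orient X Y Z = - orient Z Y X.
Proof. destruct X, Y, Z; unfold orient, cross, vsub; simpl; ring. Qed.

Lemma midpoint_swap X Y : midpoint X Y = midpoint Y X.
Proof. destruct X, Y; unfold midpoint, vscale, vadd; simpl; f_equal; ring. Qed.

Theorem theorem4 (A B C D E F I1 I2 : point) :
  convex_quad A B C D ->
  ~ parallel A B D C ->
  ~ parallel A D B C ->
  on_line E A B -> on_line E D C ->
  on_line F A D -> on_line F B C ->
  on_bisector I1 A E D -> on_line I1 (midpoint A C) (midpoint B D) ->
  (forall P, on_bisector P A E D -> on_line P (midpoint A C) (midpoint B D) -> P = I1) ->
  on_bisector I2 A F B -> on_line I2 (midpoint A C) (midpoint B D) ->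
  (forall P, on_bisector P A F B -> on_line P (midpoint A C) (midpoint B D) -> P = I2) ->
  let r1 := dist_line I1 A B in
  let r2 := dist_line I2 B C in
  ((tangent_line I1 r1 B C \/ tangent_line I1 r1 D A) ->
     tangent_line I1 r1 A B /\ tangent_line I1 r1 B C /\
     tangent_line I1 r1 C D /\ tangent_line I1 r1 D A) /\
  ((tangent_line I2 r2 A B \/ tangent_line I2 r2 C D) ->
     tangent_line I2 r2 A B /\ tangent_line I2 r2 B C /\
     tangent_line I2 r2 C D /\ tangent_line I2 r2 D A).
Proof.
  intros Hcv Hp1 Hp2 HE1 HE2 HF1 HF2 Hb1 HN1 _ Hb2 HN2 _ r1 r2.
  assert (o1 : orient A B C <> 0 /\ orient B C D <> 0 /\ orient C D A <> 0 /\ orient D A B <> 0).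
  { destruct Hcv as [[h1 [h2 [h3 h4]]]|[h1 [h2 [h3 h4]]]]; repeat split; lra. }
  destruct o1 as [o1 [o2 [o3 o4]]].
  unfold tangent_line. split.
  - destruct (part A B C D E I1 o1 o2 o3 o4 Hp1 HE1 HE2 Hb1 HN1) as [HCD HX].
    unfold r1. intro H. destruct (HX H) as [H1 H2]. tauto.
  - rewrite midpoint_swap with (X := B) in HN2.
    assert (q1 : orient A D C <> 0) by (rewrite orient_rev; lra).
    assert (q2 : orient D C B <> 0) by (rewrite orient_rev; lra).
    assert (q3 : orient C B A <> 0) by (rewrite orient_rev; lra).
    assert (q4 : orient B A D <> 0) by (rewrite orient_rev; lra).
    destruct (part A D C B F I2 q1 q2 q3 q4 Hp2 HF1 HF2 Hb2 HN2) as [HCB HX].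
    assert (Hr : r2 = dist_line I2 A D) by (unfold r2; rewrite dist_sym; exact HCB).
    rewrite Hr. rewrite (dist_sym I2 C D), (dist_sym I2 A B), (dist_sym I2 B C), (dist_sym I2 D A).
    intro H. apply or_comm in H. destruct (HX H) as [H1 H2]. rewrite H1, H2. tauto.
Qed.
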